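(* For every $n\ge1$, the sum of the coefficients of the degree-one monomials $X_0,X_1,\dots,X_{n-1}$ in the polynomial $\widehat C_n$ equals $(-1)^{n-1}$.
   Context: Polynomials $S_i(n)$: let $a_0,a_1,\dots$ be indeterminates, $a(x)=\sum_{i\ge0}a_ix^i$; for a positive integer $j$ set $G(x)=\prod_{i=0}^{j-1}\frac{1+a(x)x^2}{1+ix}$, $H(x)=\prod_{i=1-j}^{-1}\frac{1+ix}{1+a(x)x^2}$, $u=2j-1$, $v=j(j-1)$. For each $n\ge1$ there are unique $S_0(n),\dots,S_n(n)\in\mathbb{Q}[a_0,\dots,a_{n-2}]$, independent of $j$, with: for every positive integer $j$ the coefficient of $x^{n-1}$ in $\frac{G(x)-H(x)}{x^2}(1+a(x)x^2)$ equals $u(a_{n-1}+S_0(n)+\sum_{i=1}^nS_i(n)v^i)$. Write $S_i(n)(c_1,\dots,c_{n-1})$ for the substitution $a_k=c_{k+1}$. Recursion: $X_0,X_1,\dots$ are indeterminates, $D$ is the $\mathbb{Q}$-linear derivation of $\mathbb{Q}[X_0,X_1,\dots]$ with $D(X_k)=X_{k+1}$, $P_1=X_0$, $P_{m+1}=D(P_m)-3X_0P_m$, and for $m\ge1$ \[\widehat C_m=-S_0(m)(\widehat C_1,\dots,\widehat C_{m-1})+\sum_{i=1}^m3\cdot2^iS_i(m)(\widehat C_1,\dots,\widehat C_{m-1})P_i.\] *)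

(* Defs.v *)
From mathcomp Require Import all_boot all_order all_algebra.
From mathcomp Require Import mpoly.
Set Implicit Arguments. Unset Strict Implicit. Unset Printing Implicit Defensive.
Import GRing.Theory.
Local Open Scope ring_scope.

Section Series.
Variable R : comRingType.
Definition series := nat -> R.
Definition sone : series := fun m => (m == 0%N)%:R.
Definition sX : series := fun m => (m == 1%N)%:R.
Definition sC (c : R) : series := fun m => if m == 0%N then c else 0.
Definition sadd (f g : series) : series := fun m => f m + g m.
Definition sopp (f : series) : series := fun m => - f m.
Definition smul (f g : series) : series :=
  fun m => \sum_(k < m.+1) f k * g (m - k)%N.
Definition spow (f : series) (k : nat) : series := iter k (smul f) sone.
Definition sprod (fs : seq series) : series := foldr smul sone fs.
(* multiplicative inverse of a series f with constant term 1:
   1/f = 1/(1-g) = sum_k g^k with g = 1 - f (g has no constant term,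
   so only k <= m contributes to the coefficient of x^m) *)
Definition sinv (f : series) : series :=
  fun m => \sum_(k < m.+1) spow (sadd sone (sopp f)) k m.
(* (f / x^2), for f whose coefficients of x^0, x^1 vanish *)
Definition sdivX2 (f : series) : series := fun m => f m.+2.
End Series.

(* var N k = Y_k if k < N, and 0 otherwise *)
Definition var (N k : nat) : {mpoly rat[N]} := \sum_(i < N | val i == k) 'X_i.

(* S n i : Q[a_0,...,a_{n-2}] = {mpoly rat[n.-1]} ; embedded into
   Q[a_0,...,a_{n-1}] = {mpoly rat[n]} by a_k |-> a_k. *)
Definition Sfam := forall n : nat, nat -> {mpoly rat[n.-1]}.

Definition embS (n : nat) (p : {mpoly rat[n.-1]}) : {mpoly rat[n]} :=
  p \mPo [tuple var n i | i < n.-1].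

Section GH.
Variables (n j : nat).
Local Notation R := {mpoly rat[n]}.
(* a(x) = sum_i a_i x^i  (only a_0..a_{n-1} can influence the coefficient
   of x^(n-1) considered below) *)
Definition aser : series R := fun i => var n i.
Definition one_ax2 : series R := sadd (sone R) (smul aser (smul (sX R) (sX R))).
Definition lin (c : int) : series R := sadd (sone R) (smul (sC (c%:~R)) (sX R)).
Definition Gser : series R :=
  sprod [seq smul one_ax2 (sinv (lin (Posz i))) | i <- iota 0 j].
Definition Hser : series R :=
  sprod [seq smul (lin (Posz i - Posz j)) (sinv one_ax2) | i <- iota 1 j.-1].
Definition GHcoef : R := smul (sdivX2 (sadd Gser (sopp Hser))) one_ax2 n.-1.
End GH.

Definition S_spec (S : Sfam) : Prop :=
  forall n : nat, (1 <= n)%N -> forall j : nat, (1 <= j)%N ->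
    GHcoef n j =
    ((2 * j - 1)%N%:R : {mpoly rat[n]}) *
      (var n n.-1 + embS (S n 0%N)
       + \sum_(1 <= i < n.+1) embS (S n i) * ((j * (j - 1))%N%:R) ^+ i).

Section Recursion.
Variable N : nat.
Local Notation R := {mpoly rat[N]}.
(* the derivation D(X_k) = X_{k+1}, restricted to N variables
   (X_N is replaced by 0; this is exact for all uses below) *)
Definition Dder (p : R) : R := \sum_(i < N) p^`M(i) * var N i.+1.
(* Pk k = P_{k+1} *)
Fixpoint Pk (k : nat) : R :=
  if k is k'.+1 then Dder (Pk k') - 3%:R * var N 0 * Pk k' else var N 0.
Definition P (m : nat) : R := Pk m.-1.

Variable S : Sfam.
(* given cs = [:: C_1; ...; C_(m-1)], compute C_m *)
Definition Cnext (m : nat) (cs : seq R) : R :=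
  let ev (p : {mpoly rat[m.-1]}) : R := p \mPo [tuple nth 0 cs i | i < m.-1] in
  - ev (S m 0%N) + \sum_(1 <= i < m.+1) (3 * 2 ^ i)%N%:R * ev (S m i) * P i.
Fixpoint Cseq (m : nat) : seq R :=
  if m is m'.+1 then rcons (Cseq m') (Cnext m'.+1 (Cseq m')) else [::].
Definition Chat (m : nat) : R := nth 0 (Cseq m) m.-1.
End Recursion.

(* Main.v *)
Require Import Defs.
From mathcomp Require Import all_boot all_order all_algebra.
From mathcomp Require Import mpoly.
From Stdlib Require Import FunctionalExtensionality.
Set Implicit Arguments. Unset Strict Implicit. Unset Printing Implicit Defensive.
Import GRing.Theory.
Local Open Scope ring_scope.

Section SerLemmas.
Variable R : comRingType.
Implicit Types f g h : series R.

Definition shift f : series R := fun m => if m is m'.+1 then f m' else 0.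

Lemma sX_shift : sX R = shift (sone R).
Proof. by apply: functional_extensionality => -[|[|m]]. Qed.

Lemma smul_shift f g : smul f (shift g) = shift (smul f g).
Proof.
apply: functional_extensionality => -[|m]; rewrite /smul.
  by rewrite big_ord1 /= mulr0.
rewrite big_ord_recr /= subnn mulr0 addr0; apply: eq_bigr => k _.
by rewrite subSn // -ltnS.
Qed.

Lemma smulC f g : smul f g = smul g f.
Proof.
apply: functional_extensionality => m; rewrite /smul.
rewrite (reindex_inj rev_ord_inj) /=; apply: eq_bigr => k _.
rewrite subSS subKn; first exact: mulrC.
by rewrite -ltnS.
Qed.

Lemma smul1 f : smul (sone R) f = f.
Proof.
apply: functional_extensionality => m; rewrite /smul big_ord_recl big1 ?addr0.
  by rewrite /sone /= mul1r subn0.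
by move=> k _; rewrite /sone /= mul0r.
Qed.

Lemma smulr1 f : smul f (sone R) = f.
Proof. by rewrite smulC smul1. Qed.

Lemma smulDr f g h : smul f (sadd g h) = sadd (smul f g) (smul f h).
Proof.
apply: functional_extensionality => m; rewrite /smul /sadd -big_split.
by apply: eq_bigr => k _; rewrite mulrDr.
Qed.

Lemma smulNr f g : smul f (sopp g) = sopp (smul f g).
Proof.
apply: functional_extensionality => m; rewrite /smul /sopp -sumrN.
by apply: eq_bigr => k _; rewrite mulrN.
Qed.

Lemma smul0 g : smul (fun _ => 0) g = (fun _ => 0).
Proof.
by apply: functional_extensionality => m; rewrite /smul big1 // => k _; rewrite mul0r.
Qed.

Lemma smulCl c f : smul (sC c) f = (fun m => c * f m).
Proof.
apply: functional_extensionality => m; rewrite /smul big_ord_recl big1 ?addr0.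
  by rewrite /sC /= subn0.
by move=> k _; rewrite /sC /= mul0r.
Qed.

Lemma sinv_one : sinv (sone R) = sone R.
Proof.
have g0 : sadd (sone R) (sopp (sone R)) = (fun _ => 0).
  by apply: functional_extensionality => m; rewrite /sadd /sopp subrr.
apply: functional_extensionality => m; rewrite /sinv g0 big_ord_recl big1 ?addr0 //.
by move=> k _; rewrite /spow /= smul0.
Qed.

End SerLemmas.
Section MapSer.
Variables (R R' : comRingType) (g : {rmorphism R -> R'}).
Definition mapS (f : series R) : series R' := fun m => g (f m).
Let fe := @functional_extensionality nat R'.

Lemma mapS_sone : mapS (sone R) = sone R'.
Proof. by apply: fe => m; rewrite /mapS /sone rmorph_nat. Qed.
Lemma mapS_sX : mapS (sX R) = sX R'.
Proof. by apply: fe => m; rewrite /mapS /sX rmorph_nat. Qed.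
Lemma mapS_sC c : mapS (sC c) = sC (g c).
Proof. by apply: fe => m; rewrite /mapS /sC; case: (m == 0)%N; rewrite ?rmorph0. Qed.
Lemma mapS_sadd f h : mapS (sadd f h) = sadd (mapS f) (mapS h).
Proof. by apply: fe => m; rewrite /mapS /sadd rmorphD. Qed.
Lemma mapS_sopp f : mapS (sopp f) = sopp (mapS f).
Proof. by apply: fe => m; rewrite /mapS /sopp rmorphN. Qed.
Lemma mapS_smul f h : mapS (smul f h) = smul (mapS f) (mapS h).
Proof.
apply: fe => m; rewrite /mapS /smul rmorph_sum; apply: eq_bigr => k _.
by rewrite rmorphM.
Qed.
Lemma mapS_spow f k : mapS (spow f k) = spow (mapS f) k.
Proof. elim: k => [|k IH]; first exact: mapS_sone. by rewrite /= mapS_smul -IH. Qed.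
Lemma mapS_sprod fs : mapS (sprod fs) = sprod (map mapS fs).
Proof. elim: fs => [|f fs IH]; first exact: mapS_sone. by rewrite /= mapS_smul IH. Qed.
Lemma mapS_sinv f : mapS (sinv f) = sinv (mapS f).
Proof.
apply: fe => m; rewrite /mapS /sinv rmorph_sum; apply: eq_bigr => k _.
by rewrite -mapS_sone -mapS_sopp -mapS_sadd -mapS_spow.
Qed.
Lemma mapS_sdivX2 f : mapS (sdivX2 f) = sdivX2 (mapS f).
Proof. by []. Qed.
End MapSer.

Section GHgen.
Variables (R : comRingType) (a : series R).
Definition one_ax2g : series R := sadd (sone R) (smul a (smul (sX R) (sX R))).
Definition ling (c : int) : series R := sadd (sone R) (smul (sC (c%:~R)) (sX R)).
Definition Gg j : series R :=
  sprod [seq smul one_ax2g (sinv (ling (Posz i))) | i <- iota 0 j].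
Definition Hg j : series R :=
  sprod [seq smul (ling (Posz i - Posz j)) (sinv one_ax2g) | i <- iota 1 j.-1].
Definition GHg n j : R := smul (sdivX2 (sadd (Gg j) (sopp (Hg j)))) one_ax2g n.-1.
End GHgen.

Lemma GHcoefE n j : GHcoef n j = GHg (aser n) n j.
Proof. by []. Qed.

Lemma map_GHg (R R' : comRingType) (g : {rmorphism R -> R'}) a n j :
  g (GHg a n j) = GHg (mapS g a) n j.
Proof.
have h1 : mapS g (one_ax2g a) = one_ax2g (mapS g a).
  by rewrite /one_ax2g mapS_sadd mapS_smul !mapS_smul mapS_sone mapS_sX.
have h2 c : mapS g (ling R c) = ling R' c.
  by rewrite /ling mapS_sadd mapS_smul mapS_sone mapS_sX mapS_sC rmorph_int.
rewrite /GHg; change (g (smul (sdivX2 (sadd (Gg a j) (sopp (Hg a j)))) (one_ax2g a) n.-1))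
  with (mapS g (smul (sdivX2 (sadd (Gg a j) (sopp (Hg a j)))) (one_ax2g a)) n.-1).
rewrite mapS_smul mapS_sdivX2 mapS_sadd mapS_sopp h1 /Gg /Hg !mapS_sprod -!map_comp.
congr (smul (sdivX2 (sadd (sprod _) (sopp (sprod _)))) _ _).
  by apply: eq_map => i /=; rewrite mapS_smul h1 mapS_sinv h2.
by apply: eq_map => i /=; rewrite mapS_smul h2 mapS_sinv h1.
Qed.
Section Comp.
Variable R : comRingType.
Let fe := @functional_extensionality nat R.

Lemma x2x : smul (sX R) (sX R) = shift (shift (sone R)).
Proof. by rewrite {2}sX_shift smul_shift smulr1 sX_shift. Qed.

Lemma ling0 : ling R 0 = sone R.
Proof.
rewrite /ling mulr0z smulCl; apply: fe => m.
by rewrite /sadd mul0r addr0.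
Qed.

Lemma GH1 (a : series R) n : GHg a n 1 = smul a (one_ax2g a) n.-1.
Proof.
rewrite /GHg /Gg /Hg /= ling0 sinv_one !smulr1.
congr (smul _ _ _); apply: fe => m.
rewrite /sdivX2 /sadd /sopp /one_ax2g /sone /= subr0.
rewrite /sadd /= add0r x2x !smul_shift smulr1.
by [].
Qed.

Lemma smul_oppX f : smul (sopp (sX R)) f = sopp (shift f).
Proof. by rewrite smulC smulNr sX_shift smul_shift smulr1. Qed.

Lemma spow_oppX k : spow (sopp (sX R)) k = fun m => (-1) ^+ k * (m == k)%:R.
Proof.
elim: k => [|k IH]; first by apply: fe => m; rewrite expr0 mul1r.
rewrite /= -/(spow _ k) smul_oppX IH; apply: fe => -[|m] /=.
  by rewrite /sopp /= oppr0 mulr0.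
by rewrite /sopp eqSS exprS /= mulN1r mulNr.
Qed.

Lemma sinv_lin1 : sinv (ling R 1) = fun m => (-1) ^+ m.
Proof.
have E : sadd (sone R) (sopp (ling R 1)) = sopp (sX R).
  apply: fe => m; rewrite /ling mulr1z smulCl /sadd /sopp mul1r.
  by rewrite opprD addrA subrr add0r.
apply: fe => m; rewrite /sinv E.
under eq_bigr => k _ do rewrite spow_oppX.
rewrite big_ord_recr /= eqxx mulr1 big1 ?add0r // => k _.
by rewrite (gtn_eqF (ltn_ord k)) mulr0.
Qed.

Lemma GH2 n : (1 <= n)%N -> GHg (fun _ => 0 : R) n 2 = (-1) ^+ n.-1.
Proof.
case: n => // n _.
have o0 : one_ax2g (fun _ => 0 : R) = sone R.
  rewrite /one_ax2g smul0; apply: fe => m; by rewrite /sadd addr0.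
rewrite /GHg /Gg /Hg /= o0 sinv_one ling0 sinv_one !smul1 !smulr1 sinv_lin1.
have -> : (Posz 1 - Posz 2) = -1 by [].
rewrite /sdivX2 /sadd /sopp /ling mulrN1z smulCl /sone /sX /=.
by rewrite /sadd /= mulr0 addr0 subr0 !exprS !mulN1r opprK.
Qed.
End Comp.
Section MmapLemmas.

Lemma mmap_comp (n k : nat) (S' : comRingType) (f : {rmorphism rat -> S'})
  (h : 'I_k -> S') (lq : n.-tuple {mpoly rat[k]}) (p : {mpoly rat[n]}) :
  mmap f h (p \mPo lq) = mmap f (fun i => mmap f h (tnth lq i)) p.
Proof.
rewrite comp_mpolyEX raddf_sum [RHS]/mmap; apply: eq_bigr => m _.
rewrite /= mmapZ comp_mpolyX rmorph_prod /mmap1; congr (_ * _).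
by apply: eq_bigr => i _; rewrite rmorphXn.
Qed.

Lemma rmorph_mmap (n : nat) (S' S'' : comRingType) (f : rat -> S') (h : 'I_n -> S')
  (g : {rmorphism S' -> S''}) (p : {mpoly rat[n]}) :
  g (mmap f h p) = mmap (g \o f) (g \o h) p.
Proof.
rewrite /mmap rmorph_sum; apply: eq_bigr => m _; rewrite rmorphM /mmap1 rmorph_prod.
by congr (_ * _); apply: eq_bigr => i _; rewrite rmorphXn.
Qed.

Lemma mmap_ext (n : nat) (S' : comRingType) (f1 f2 : rat -> S') (h1 h2 : 'I_n -> S')
  (p : {mpoly rat[n]}) : f1 =1 f2 -> h1 =1 h2 -> mmap f1 h1 p = mmap f2 h2 p.
Proof.
move=> ef eh; rewrite /mmap; apply: eq_bigr => m _.
by rewrite ef (mmap1_eq _ eh).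
Qed.

Lemma sum_valeq (V : nmodType) (N k : nat) (F : nat -> V) :
  \sum_(i < N | val i == k) F (val i) = if (k < N)%N then F k else 0.
Proof.
case: ltnP => hk.
  by rewrite (big_pred1 (Ordinal hk)) // => i /=; rewrite -val_eqE.
rewrite big_pred0 // => i; rewrite ltn_eqF //.
exact: leq_trans (ltn_ord i) hk.
Qed.

Lemma mmap_var (N : nat) (S' : comRingType) (f : {rmorphism rat -> S'}) (H : nat -> S') k :
  mmap f (fun l : 'I_N => H (val l)) (var N k) = if (k < N)%N then H k else 0.
Proof.
rewrite /var raddf_sum /= -sum_valeq; apply: eq_bigr => i _.
by rewrite mmapX mmap1U.
Qed.

Lemma mcoeff_msupp_sum (N : nat) (p : {mpoly rat[N]}) m0 :
  p@_m0 = \sum_(m <- msupp p) p@_m * (m == m0)%:R.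
Proof.
rewrite {1}(mpolyE p) raddf_sum; apply: eq_bigr => m _.
by rewrite /= mcoeffZ mcoeffX.
Qed.

Definition phi (N : nat) (p : {mpoly rat[N]}) : {poly rat} :=
  mmap (@polyC rat) (fun _ : 'I_N => 'X) p.

Lemma phi_coef (N : nat) (p : {mpoly rat[N]}) j :
  (phi p)`_j = \sum_(m <- msupp p) p@_m * (j == mdeg m)%:R.
Proof.
rewrite /phi /mmap coef_sum; apply: eq_bigr => m _.
by rewrite coefCM /mmap1 prodrXr -mdegE coefXn.
Qed.

Lemma phi_coef0 (N : nat) (p : {mpoly rat[N]}) : (phi p)`_0 = p@_0%MM.
Proof.
rewrite phi_coef (mcoeff_msupp_sum p 0%MM); apply: eq_bigr => m _.
by rewrite eq_sym mdeg_eq0.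
Qed.

Lemma phi_coef1 (N : nat) (p : {mpoly rat[N]}) :
  (phi p)`_1 = \sum_(i < N) p@_(U_(i))%MM.
Proof.
under [RHS]eq_bigr => i _ do rewrite (mcoeff_msupp_sum p).
rewrite exchange_big phi_coef; apply: eq_bigr => m _; rewrite -mulr_sumr.
congr (_ * _); rewrite eq_sym; case: (mdeg1P m) => [[i /eqP ->]|hm].
  rewrite (bigD1 i) //= eqxx big1 ?addr0 // => j hj.
  by rewrite eq_mnm1 eq_sym (negbTE hj).
by rewrite big1 // => i _; case: eqP => // e; case: hm; exists i; apply/eqP.
Qed.

End MmapLemmas.
Section PkInv.
Variable N : nat.
Implicit Types (p q : {mpoly rat[N]}).

Lemma mcoeffMXi q (j : 'I_N) m :
  (q * 'X_j)@_m = \sum_(m' <- msupp q) q@_m' * ((m' + U_(j))%MM == m)%:R.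
Proof.
rewrite {1}(mpolyE q) mulr_suml raddf_sum; apply: eq_bigr => m' _.
by rewrite /= -scalerAl -mpolyXD mcoeffZ mcoeffX.
Qed.

Lemma mnm_addU0 (m' : 'X_{1..N}) (j : 'I_N) : (m' + U_(j) == 0)%MM = false.
Proof.
apply/negbTE/negP => /eqP e; have := congr1 mdeg e.
by rewrite mdegD mdeg1 mdeg0 addn1.
Qed.

Lemma mnm_addU1 (m' : 'X_{1..N}) (j l : 'I_N) :
  (m' + U_(j) == U_(l))%MM = (m' == 0%MM) && (j == l).
Proof.
apply/idP/idP.
  move/eqP=> e; have := congr1 mdeg e; rewrite mdegD !mdeg1 addn1 => -[].
  move/eqP; rewrite mdeg_eq0 => /eqP m0; rewrite m0 add0m in e.
  by rewrite m0 eqxx -eq_mnm1 e eqxx.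
by case/andP=> /eqP -> /eqP ->; rewrite add0m.
Qed.

Lemma sum_pred_eq (k : nat) (l : 'I_N) :
  \sum_(i < N | val i == k) ((i == l)%:R : rat) = (val l == k)%:R.
Proof.
case: (eqVneq (val l) k) => hl.
  rewrite (big_pred1 l) ?eqxx // => i /=; by rewrite -hl val_eqE.
rewrite big1 // => i /eqP hi; case: eqP => // e; by rewrite -e hi eqxx in hl.
Qed.

Lemma mcoeff_Mvar0 q k : (q * var N k)@_0%MM = 0.
Proof.
rewrite /var mulr_sumr raddf_sum big1 //= => i _.
by rewrite mcoeffMXi big1 // => m' _; rewrite mnm_addU0 mulr0.
Qed.

Lemma mcoeff_MvarU q k (l : 'I_N) :
  (q * var N k)@_(U_(l))%MM = (val l == k)%:R * q@_0%MM.
Proof.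
rewrite /var mulr_sumr raddf_sum /=.
transitivity (\sum_(i < N | val i == k) (i == l)%:R * q@_0%MM); last first.
  by rewrite -mulr_suml sum_pred_eq.
apply: eq_bigr => i _; rewrite mcoeffMXi (mcoeff_msupp_sum q 0%MM) mulr_sumr.
apply: eq_bigr => m' _; rewrite mnm_addU1 -mulnb natrM.
by rewrite mulrA mulrC.
Qed.

Lemma Dder_coef0 p : (Dder p)@_0%MM = 0.
Proof. by rewrite /Dder raddf_sum big1 // => i _; rewrite /= mcoeff_Mvar0. Qed.

Lemma Dder_coefU p (l : 'I_N) :
  (Dder p)@_(U_(l))%MM = \sum_(i < N) (val l == (val i).+1)%:R * p@_(U_(i))%MM.
Proof.
rewrite /Dder raddf_sum; apply: eq_bigr => i _.
by rewrite /= mcoeff_MvarU mcoeff_deriv mnm0E add0m mulr1n.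
Qed.

Lemma sum_shift_eq (k : nat) (l : 'I_N) :
  \sum_(i < N) ((val l == (val i).+1)%:R * (val i == k)%:R : rat) = (val l == k.+1)%:R.
Proof.
rewrite (eq_bigr (fun i : 'I_N => (val i == k)%:R * (val l == k.+1)%:R)); last first.
  by move=> i _; case: (eqVneq (val i) k) => [->|_]; rewrite ?mulr0 ?mul0r // mulrC.
rewrite -mulr_suml.
have -> : \sum_(i < N) ((val i == k)%:R : rat) = \sum_(i < N | val i == k) 1.
  by rewrite [RHS]big_mkcond; apply: eq_bigr => i _; case: eqP.
have := sum_valeq N k (fun _ => 1 : rat); rewrite /= => ->.
case: (eqVneq (val l) k.+1) => hl; last by rewrite mulr0.
rewrite ifT ?mul1r //; apply: ltnW; rewrite -hl; exact: ltn_ord.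
Qed.

Lemma Pk_inv k : (Pk N k)@_0%MM = 0 /\
  forall l : 'I_N, (Pk N k)@_(U_(l))%MM = (val l == k)%:R.
Proof.
elim: k => [|k [IH0 IHU]] /=.
  split.
    rewrite /var raddf_sum big1 //= => i _; by rewrite mcoeffX mnm1_eq0.
  move=> l; rewrite /var raddf_sum /= -sum_pred_eq; apply: eq_bigr => i _.
  by rewrite mcoeffXU.
have -> : 3%:R * var N 0 * Pk N k = (Pk N k * var N 0) *+ 3.
  by rewrite mulr_natl mulrnAl mulrC.
split; first by rewrite mcoeffB mcoeffMn Dder_coef0 mcoeff_Mvar0 mul0rn subrr.
move=> l; rewrite mcoeffB mcoeffMn Dder_coefU mcoeff_MvarU IH0 mulr0 mul0rn subr0.
rewrite -(sum_shift_eq k l); apply: eq_bigr => i _; by rewrite IHU.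
Qed.

End PkInv.

Lemma coef1M (p q : {poly rat}) : (p * q)`_1 = p`_0 * q`_1 + p`_1 * q`_0.
Proof. by rewrite coefM big_ord_recr big_ord1 /=. Qed.

Lemma sum_eq_nat (N k : nat) :
  \sum_(i < N) ((val i == k)%:R : rat) = if (k < N)%N then 1 else 0.
Proof.
have -> : \sum_(i < N) ((val i == k)%:R : rat) = \sum_(i < N | val i == k) 1.
  by rewrite [RHS]big_mkcond; apply: eq_bigr => i _; case: eqP.
by have := sum_valeq N k (fun _ => 1 : rat); rewrite /= => ->.
Qed.

Lemma phiP0 N i : (phi (P N i))`_0 = 0.
Proof. by rewrite phi_coef0 (Pk_inv N i.-1).1. Qed.

Lemma phiP1 N i : (1 <= i <= N)%N -> (phi (P N i))`_1 = 1.
Proof.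
case/andP=> h1 h2; rewrite phi_coef1.
under eq_bigr => l _ do rewrite (Pk_inv N i.-1).2.
by rewrite sum_eq_nat ifT // prednK.
Qed.

Lemma Z2smul (a b : series {poly rat}) (ha : forall k, (a k)`_0 = 0) k :
  (smul a (smul a b) k)`_0 = 0 /\ (smul a (smul a b) k)`_1 = 0.
Proof.
have h0 j : (smul a b j)`_0 = 0.
  by rewrite /smul coef_sum big1 // => l _; rewrite coef0M ha mul0r.
split; rewrite /smul coef_sum big1 // => l _.
  by rewrite coef0M ha mul0r.
by rewrite coef1M ha h0 mul0r mulr0 addr0.
Qed.

Section PhiMorph.
Variable N : nat.
Implicit Types a b : {mpoly rat[N]}.
Lemma phiD a b : phi (a + b) = phi a + phi b. Proof. exact: rmorphD. Qed.
Lemma phiN a : phi (- a) = - phi a. Proof. exact: rmorphN. Qed.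
Lemma phiM a b : phi (a * b) = phi a * phi b. Proof. exact: rmorphM. Qed.
Lemma phi_nat k : phi (k%:R : {mpoly rat[N]}) = k%:R. Proof. exact: rmorph_nat. Qed.
Lemma phi_sum I (r : seq I) (Pr : pred I) (F : I -> {mpoly rat[N]}) :
  phi (\sum_(i <- r | Pr i) F i) = \sum_(i <- r | Pr i) phi (F i).
Proof. exact: rmorph_sum. Qed.
End PhiMorph.
Section Key.
Variables (N : nat) (S : Sfam) (HS : S_spec S).

Lemma key_step m (cs : seq {mpoly rat[N]}) : (1 <= m)%N ->
  (forall i, (phi (nth 0 cs i))`_0 = 0) ->
  (phi (Cnext S m cs))`_0 = 0 /\
  ((m <= N)%N -> (phi (Cnext S m cs))`_1 = (-1) ^+ m.-1).
Proof.
move=> hm Hcs.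
pose y := fun i : 'I_m.-1 => phi (nth 0 cs i).
have Ephi p : phi (p \mPo [tuple nth 0 cs i | i < m.-1]) = mmap (@polyC rat) y p.
  by rewrite /phi mmap_comp; apply: mmap_ext => // i; rewrite tnth_mktuple.
pose z := fun i : 'I_m => phi (nth 0 cs i).
pose psi := mmap (@polyC rat) z.
have Epsi_var k : psi (var m k) = if (k < m)%N then phi (nth 0 cs k) else 0.
  exact: (mmap_var m (@polyC rat) (fun k => phi (nth 0 cs k))).
have Epsi_emb p : psi (embS p) = mmap (@polyC rat) y p.
  rewrite /embS /psi mmap_comp; apply: mmap_ext => // i.
  rewrite tnth_mktuple -/psi Epsi_var ifT //.
  exact: leq_trans (ltn_ord i) (leq_pred m).
have ha k : (psi (var m k))`_0 = 0.
  by rewrite Epsi_var; case: ifP => _; rewrite ?coef0.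
have HS1 : GHcoef m 1 = var m m.-1 + embS (S m 0).
  rewrite (HS hm (isT : (1 <= 1)%N)) /= mul1n subnn mulr0n mul1r.
  rewrite big_nat big1 ?addr0 // => i /andP [hi _].
  by rewrite expr0n gtn_eqF // mulr0.
have hE0 : (mmap (@polyC rat) y (S m 0))`_0 = 0 /\ (mmap (@polyC rat) y (S m 0))`_1 = 0.
  have := congr1 psi HS1.
  rewrite GHcoefE /psi (map_GHg (mmap (@polyC rat) z)) GH1 rmorphD /= -/psi Epsi_emb /one_ax2g smulDr smulr1.
  rewrite /sadd => /addrI <-; apply: Z2smul => k; exact: ha.
have hev p : (mmap (@polyC rat) y p)`_0 = p.@[fun _ => 0].
  rewrite -horner_coef0 -horner_evalE rmorph_mmap /meval.
  apply: mmap_ext => [c|i] /=; first by rewrite horner_evalE hornerC.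
  by rewrite horner_evalE horner_coef0 Hcs.
have EC : phi (Cnext S m cs) = - mmap (@polyC rat) y (S m 0) +
   \sum_(1 <= i < m.+1) (mmap (@polyC rat) y (S m i) * phi (P N i)) *+ (3 * 2 ^ i).
  rewrite /Cnext phiD phiN Ephi phi_sum.
  congr (_ + _); apply: eq_bigr => i _.
  by rewrite !phiM phi_nat Ephi -mulrA mulr_natl.
rewrite EC; split.
  rewrite coefD coefN hE0.1 oppr0 add0r coef_sum big1 // => i _.
  by rewrite coefMn coef0M phiP0 mulr0 mul0rn.
move=> hmN; rewrite coefD coefN hE0.2 oppr0 add0r coef_sum.
transitivity (\sum_(1 <= i < m.+1) (S m i).@[fun _ => 0] *+ (3 * 2 ^ i)).
  rewrite !big_nat; apply: eq_bigr => i /andP [h1 h2].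
  rewrite coefMn coef1M phiP0 phiP1 ?mulr0 ?addr0 ?mulr1 ?hev //.
  by rewrite h1 (leq_trans _ hmN).
have HS2 := HS hm (isT : (1 <= 2)%N).
have := congr1 (meval (fun _ : 'I_m => 0 : rat)) HS2.
rewrite GHcoefE (map_GHg (meval (fun _ : 'I_m => 0 : rat))).
have -> : mapS (meval (fun _ : 'I_m => 0:rat)) (aser m) = (fun _ => 0).
  apply: functional_extensionality => k; rewrite /mapS /aser /var raddf_sum big1 // => i _.
  by rewrite /= mevalXU.
rewrite GH2 //.
have mev_var k : (var m k).@[fun _ : 'I_m => 0 : rat] = 0.
  by rewrite /var raddf_sum big1 // => l _; rewrite /= mevalXU.
have mev_emb p : (embS p).@[fun _ : 'I_m => 0 : rat] = p.@[fun _ => 0].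
  rewrite /embS comp_mpoly_meval; apply: meval_eq => i.
  by rewrite tnth_mktuple mev_var.
have S00 : (S m 0).@[fun _ => 0 : rat] = 0 by rewrite -hev hE0.1.
move=> ->; rewrite mevalM rmorph_nat !mevalD mev_var mev_emb S00 !add0r raddf_sum /=.
under [in RHS]eq_bigr => i _ do rewrite mevalM rmorphXn rmorph_nat mev_emb.
rewrite mulr_sumr; apply: eq_bigr => i _.
by rewrite -mulr_natr natrM natrX mulrCA mulrA.
Qed.
End Key.

Lemma Cseq_size N S m : size (Cseq N S m) = m.
Proof. by elim: m => [|m IH] //=; rewrite size_rcons IH. Qed.

Lemma phi0 N : phi (0 : {mpoly rat[N]}) = 0.
Proof. exact: rmorph0. Qed.

Lemma Cseq_Z1 N S (HS : S_spec S) m i : (phi (nth 0 (Cseq N S m) i))`_0 = 0.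
Proof.
elim: m i => [|m IH] i /=; first by rewrite nth_nil phi0 coef0.
rewrite nth_rcons; case: ifP => _; first exact: IH.
case: ifP => _; last by rewrite phi0 coef0.
exact: (key_step HS (m:=m.+1) (cs:=Cseq N S m) isT IH).1.
Qed.

Theorem proposition4p5 (S : Sfam) (HS : S_spec S) (n : nat) (hn : (1 <= n)%N) :
  \sum_(i < n) (Chat n S n)@_(U_(i))%MM = (-1) ^+ n.-1.
Proof.
case: n hn => // n _.
rewrite -phi_coef1 /Chat /= nth_rcons Cseq_size ltnn eqxx.
have [_ h] := key_step HS (m:=n.+1) (cs:=Cseq n.+1 S n) isT (fun i => Cseq_Z1 n.+1 HS n i).
exact: h.
Qed.
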